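(* Let $p$ be an odd prime and $d$ a positive integer. Then $L(d+p^2)=L(d)+L(p^2+1)$.
   Context: For an odd prime $p$ and a positive integer $d$, define $$L(d)=\max_{1\le j\le p-1}\ \sum_{i=j}^{p-1}\left(\left\lfloor \frac{id}{p}\right\rfloor-\left\lfloor \frac{id}{p}-\left(1-\frac1p\right)\frac{jd}{p}\right\rfloor\right).$$ *)

(* Defs.v *)
From mathcomp Require Import all_boot all_order all_algebra.
Set Implicit Arguments. Unset Strict Implicit. Unset Printing Implicit Defensive.
Import Order.TTheory GRing.Theory Num.Theory.
Local Open Scope ring_scope.

(* Summand: floor(i d / p) - floor(i d / p - (1 - 1/p) j d / p).
   The second argument equals (i d p - (p-1) j d) / p^2, and intdiv's
   divz is the floor division for a positive divisor. *)
Definition Lterm (p d i j : nat) : int :=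
  ((i * d)%:Z %/ p%:Z)%Z
  - (((i * d * p)%:Z - ((p - 1) * j * d)%:Z) %/ (p ^ 2)%:Z)%Z.

Definition Lsum (p d j : nat) : int :=
  \sum_(j <= i < p) Lterm p d i j.

Definition L (p d : nat) : int :=
  \big[Num.max/Lsum p d 1]_(1 <= j < p) Lsum p d j.

(* Main.v *)
Require Import Defs.
From mathcomp Require Import all_boot all_order all_algebra.
From mathcomp Require Import zify.
Set Implicit Arguments. Unset Strict Implicit. Unset Printing Implicit Defensive.
Import Order.TTheory GRing.Theory Num.Theory.

Definition F (p d x : nat) : nat := x * d %/ p ^ 2.

Lemma Lterm_eq p d i j : 0 < p -> j <= i ->
  Lterm p d i j = ((F p d (i * p))%:Z - (F p d ((i - j) * p + j))%:Z)%R.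
Proof.
move=> p0 ji; rewrite /Lterm /F.
have e1: i * d * p - (p-1)*j*d = ((i - j) * p + j) * d.
  have [k ->] : exists k, i = j + k by exists (i - j); lia.
  rewrite addKn. nia.
rewrite subzn; last nia.
rewrite e1 !divz_nat; congr (_ - _)%R; congr Posz.
by rewrite expnS expn1 mulnAC divnMr.
Qed.

Definition S1 p d j := \sum_(j <= i < p) F p d (i * p).
Definition S2 p d j := \sum_(0 <= k < p - j) F p d (k * p + j).

Lemma sumz (m n : nat) (G : nat -> nat) :
  Posz (\sum_(m <= i < n) G i) = (\sum_(m <= i < n) Posz (G i))%R.
Proof. exact: (big_morph Posz PoszD (erefl _)). Qed.

Lemma Lsum_eq p d j : 0 < p -> Lsum p d j = (Posz (S1 p d j) - Posz (S2 p d j))%R.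
Proof.
move=> p0; rewrite /Lsum.
rewrite (@eq_big_nat _ _ _ j p _ (fun i => (Posz (F p d (i * p)) - Posz (F p d ((i - j) * p + j)))%R)); last first.
  move=> i /andP[ji _]; exact: Lterm_eq.
rewrite sumrB /S1 /S2 !sumz; congr (_ - _)%R.
rewrite -{1}(add0n j) big_addn; apply: eq_bigr => k _; by rewrite addnK.
Qed.

Lemma Lsum_eq2 p d j : 0 < p -> Lsum p d j =
  (\sum_(0 <= k < p - j) (Posz (F p d ((k + j) * p)) - Posz (F p d (k * p + j))))%R.
Proof.
move=> p0; rewrite Lsum_eq // /S1 /S2 -{1}(add0n j) big_addn !sumz -sumrB.
by [].
Qed.

Lemma F_shift p d x : 0 < p -> F p (d + p ^ 2) x = F p d x + x.
Proof.
move=> p0; rewrite /F mulnDr divnDMl //; by rewrite expn_gt0 p0.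
Qed.

Lemma mulrn_posz (x n : nat) : ((Posz x) *+ n)%R = Posz (x * n).
Proof.
elim: n => [|n IH]; first by rewrite muln0.
by rewrite mulrS IH mulnS PoszD.
Qed.

Lemma Lsum_shift p d j : 0 < p -> j < p ->
  Lsum p (d + p ^ 2) j = (Lsum p d j + Posz ((j * (p - 1)) * (p - j)))%R.
Proof.
move=> p0 jp; rewrite !Lsum_eq2 // -mulrn_posz.
have -> : (Posz (j * (p - 1)) *+ (p - j))%R = (\sum_(0 <= k < p - j) Posz (j * (p - 1)))%R
  by rewrite sumr_const_nat subn0.
rewrite -big_split /=.
apply: eq_bigr => k _; rewrite !F_shift // !PoszD.
have -> : Posz ((k + j) * p) = (Posz (k * p + j) + Posz (j * (p - 1)))%R.
  rewrite -PoszD; congr Posz; nia.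
lia.
Qed.

Lemma Lsum_one p j : 0 < p -> j < p -> Lsum p 1 j = 0%R.
Proof.
move=> p0 jp; rewrite Lsum_eq2 //; apply: big1_seq => k; rewrite mem_index_iota => /andP[_ kp].
rewrite /F !muln1 !divn_small ?subrr // expnS expn1; nia.
Qed.

Lemma F_mono p d x y : x <= y -> F p d x <= F p d y.
Proof. by move=> xy; rewrite /F leq_div2r // leq_mul2r xy orbT. Qed.

Lemma herm0 p m : 0 < p -> \sum_(0 <= r < p) (r + m) %/ p = m.
Proof.
move=> p0; elim: m => [|m IH].
  by apply: big1_seq => r; rewrite mem_index_iota addn0 => /andP[_ rp]; rewrite divn_small.
have e1 := @big_nat_recl _ 0 addn p 0 (fun r => (r + m) %/ p) (leq0n p).
have e2 := @big_nat_recr _ 0 addn p 0 (fun r => (r + m) %/ p) (leq0n p).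
rewrite e1 /= in e2.
have e3 : \sum_(0 <= r < p) (r + m.+1) %/ p = \sum_(0 <= i < p) (i.+1 + m) %/ p.
  by apply: eq_bigr => i _; rewrite addnS addSn.
rewrite e3.
have e4 : (p + m) %/ p = m %/ p + 1 by rewrite addnC -{1}(mul1n p) divnDMl.
rewrite IH e4 add0n in e2; lia.
Qed.

Lemma perm_sum p d (G : nat -> nat) : 0 < p -> coprime p d ->
  \sum_(0 <= k < p) G (k * d %% p) = \sum_(0 <= k < p) G k.
Proof.
move=> p0 cop; rewrite !big_mkord.
pose h (k : 'I_p) : 'I_p := Ordinal (ltn_pmod (k * d) p0).
have hinj : injective h.
  move=> x y /(congr1 val) /= hxy; apply: val_inj => /=.
  wlog le: x y hxy / x <= y.
    move=> W; case/orP: (leq_total x y) => H; first exact: W.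
    by apply/esym; apply: W.
  have : p %| (y - x) * d.
    by rewrite mulnBl -eqn_mod_dvd ?leq_mul2r ?le ?orbT // hxy.
  rewrite Gauss_dvdl //.
  move=> dv; suff : y - x = 0 by lia.
  have lt : y - x < p by have := ltn_ord y; lia.
  move: dv lt; case: (y - x) => [|n] // dv lt.
  by have := dvdn_leq (ltn0Sn n) dv; lia.
by rewrite [RHS](reindex_inj hinj).
Qed.

Lemma hermF p d j : 0 < p -> coprime p d ->
  \sum_(0 <= k < p) F p d (k * p + j) = j * d %/ p + \sum_(0 <= k < p) (k * d %/ p).
Proof.
move=> p0 cop.
have e k : F p d (k * p + j) = k * d %/ p + (k * d %% p + j * d %/ p) %/ p.
  rewrite /F expnS expn1 divnMA mulnDl mulnAC divnMDl //.
  rewrite {1}(divn_eq (k * d) p) -addnA divnMDl //.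
rewrite (eq_bigr _ (fun k _ => e k)) big_split /= addnC; congr (_ + _).
rewrite (perm_sum (fun r => (r + j * d %/ p) %/ p) p0 cop).
exact: herm0.
Qed.

Lemma Fjp p d j : 0 < p -> F p d (j * p) = j * d %/ p.
Proof. by move=> p0; rewrite /F expnS expn1 mulnAC divnMr. Qed.

Lemma incr_cop p d j : 0 < p -> coprime p d -> j.+1 <= p - j.+1 ->
  F p d (j * p) + \sum_(0 <= k < p - j.+1) F p d (k * p + j.+1)
  <= F p d ((p - j.+1) * p + j) + \sum_(0 <= k < p - j.+1) F p d (k * p + j).
Proof.
move=> p0 cop hP; set P := p - j.+1.
have Pp : P <= p by rewrite /P leq_subr.
have h1 := hermF j.+1 p0 cop. have h0 := hermF j p0 cop.
rewrite (big_cat_nat (leq0n P) Pp) /= in h1.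
rewrite (big_cat_nat (leq0n P) Pp) /= in h0.
have m : \sum_(P <= k < p) F p d (k * p + j) <= \sum_(P <= k < p) F p d (k * p + j.+1).
  by apply: leq_sum => k _; apply: F_mono; rewrite addnS.
have m2 : F p d (j.+1 * p) <= F p d (P * p + j).
  apply: F_mono; apply: leq_trans (leq_addr _ _); by rewrite leq_mul2r hP orbT.
rewrite !Fjp // in m2 *.
lia.
Qed.

Lemma arith_key p P j s a b : j + 2 <= P -> p = P + j + 1 -> s < p ->
  p * a <= j * s -> j * s < p * (a + 1) ->
  p * b <= (j + 1) * s -> (j + 1) * s < p * (b + 1) ->
  P * b <= (P - j) * s + a + P * a.
Proof.
move=> hP ep sp h1 h2 h3 h4.
have bA : b <= a + 1 by nia.
case: (leqP b a) => ba; first by nia.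
have eb : b = a + 1 by lia.
subst b.
have s3 : 2 * a + 3 <= s by nia.
have W : j - a <= (P - j) * (a + 1) by nia.
have W2 : (P - j) * (a + 1) <= (P - j) * (s - 1) by apply: leq_mul; lia.
nia.
Qed.

Lemma Fdiv p e x : 0 < p -> F p (p * e) x = x * e %/ p.
Proof.
move=> p0; rewrite /F expnS expn1.
have -> : x * (p * e) = (x * e) * p by rewrite mulnCA mulnC.
by rewrite divnMr.
Qed.

Lemma Fdiv2 p e k j : 0 < p -> F p (p * e) (k * p + j) = k * e + j * e %/ p.
Proof. by move=> p0; rewrite Fdiv // mulnDl mulnAC divnMDl. Qed.

Lemma incr_div p e j : 0 < p -> j.+1 <= p - j.+1 -> 2 * j + 3 <= p ->
  F p (p * e) (j * p) + \sum_(0 <= k < p - j.+1) F p (p * e) (k * p + j.+1)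
  <= F p (p * e) ((p - j.+1) * p + j) + \sum_(0 <= k < p - j.+1) F p (p * e) (k * p + j).
Proof.
move=> p0 hP hp; set P := p - j.+1.
have sm c : \sum_(0 <= k < P) F p (p * e) (k * p + c) = \sum_(0 <= k < P) k * e + P * (c * e %/ p).
  rewrite -(subn0 P) -sum_nat_const_nat subn0 -big_split /=.
  by apply: eq_bigr => k _; rewrite Fdiv2.
rewrite !sm Fdiv2 // (Fdiv _ _ p0) mulnAC mulnK //.
suff : P * (j.+1 * e %/ p) + j * e <= P * e + j * e %/ p + P * (j * e %/ p) by lia.
have ee := divn_eq e p. set q := e %/ p in ee *. set s := e %% p in ee *.
have sp : s < p by apply: ltn_pmod.
have eA : j * e %/ p = j * q + j * s %/ p.
  by rewrite ee mulnDr mulnA divnMDl.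
have eB : j.+1 * e %/ p = j.+1 * q + j.+1 * s %/ p.
  by rewrite ee mulnDr mulnA divnMDl.
rewrite eA eB.
set a := j * s %/ p. set b := j.+1 * s %/ p.
have a1 : p * a <= j * s /\ j * s < p * (a + 1).
  have := divn_eq (j * s) p; have := ltn_pmod (j * s) p0; rewrite -/a.
  rewrite mulnDr muln1 [p * a]mulnC; lia.
have b1 : p * b <= (j + 1) * s /\ (j + 1) * s < p * (b + 1).
  have := divn_eq (j.+1 * s) p; have := ltn_pmod (j.+1 * s) p0; rewrite -/b addn1.
  rewrite mulnDr muln1 [p * b]mulnC; lia.
case: a1 => a1 a2; case: b1 => b1 b2.
have key := @arith_key p P j s a b ltac:(lia) ltac:(rewrite /P; lia) sp a1 a2 b1 b2.
have js : j * s <= P * s by rewrite leq_mul2r; apply/orP; right; lia.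
rewrite mulnBl in key.
have key2 : P * b + j * s <= P * s + a + P * a by lia.
rewrite ee.
have hq : j * p * q + P * q <= P * p * q + j * q.
  have H : j * p + P <= P * p + j.
    have h1 : P - j <= (P - j) * p by rewrite leq_pmulr.
    have h2 : j * p <= P * p by rewrite leq_mul2r; apply/orP; right; rewrite /P; lia.
    rewrite mulnBl in h1; clearbody P; lia.
  rewrite -!mulnDl; apply: leq_mul => //.
rewrite !mulnDr !mulnA.
clearbody a b q s P; clear -key2 hq; lia.
Qed.

Lemma S1_rec p d j : j < p -> S1 p d j = F p d (j * p) + S1 p d j.+1.
Proof. by move=> jp; rewrite /S1 big_ltn. Qed.

Lemma S2_rec p d j : j < p ->
  S2 p d j = \sum_(0 <= k < p - j.+1) F p d (k * p + j) + F p d ((p - j.+1) * p + j).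
Proof. by move=> jp; rewrite /S2 -subnSK // big_nat_recr. Qed.

Lemma incr_all p d j : prime p -> 2 * j + 3 <= p ->
  F p d (j * p) + \sum_(0 <= k < p - j.+1) F p d (k * p + j.+1)
  <= F p d ((p - j.+1) * p + j) + \sum_(0 <= k < p - j.+1) F p d (k * p + j).
Proof.
move=> pr hp; have p0 := prime_gt0 pr.
have hP : j.+1 <= p - j.+1 by lia.
case: (boolP (p %| d)) => [/dvdnP [e ->]|nd].
  by rewrite mulnC; apply: incr_div.
by apply: incr_cop => //; rewrite prime_coprime.
Qed.

Lemma Lsum_up p d j : prime p -> 2 * j + 3 <= p ->
  (Lsum p d j <= Lsum p d j.+1)%R.
Proof.
move=> pr hp; have p0 := prime_gt0 pr.
have jp : j < p by lia.
have j1p : j.+1 < p by lia.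
rewrite !Lsum_eq // (S1_rec d jp) (S2_rec d jp).
have := incr_all d pr hp. rewrite /S2 -/(S2 p d j.+1).
move: (S2 p d j.+1) (S1 p d j.+1) => x y H.
lia.
Qed.

Lemma Lsum_down p d j : 0 < p -> p <= 2 * j -> j.+1 < p ->
  (Lsum p d j.+1 <= Lsum p d j)%R.
Proof.
move=> p0 hp j1p; have jp : j < p by lia.
rewrite !Lsum_eq // (S1_rec d jp) (S2_rec d jp).
have H1 : \sum_(0 <= k < p - j.+1) F p d (k * p + j) <= S2 p d j.+1.
  by apply: leq_sum => k _; apply: F_mono; rewrite addnS.
have H2 : F p d ((p - j.+1) * p + j) <= F p d (j * p).
  apply: F_mono.
  have : (p - j.+1) * p + j <= (p - j.+1) * p + p by lia.
  move=> h; apply: leq_trans h _; rewrite -[X in _ + X <= _]mul1n -mulnDl leq_mul2r; apply/orP; right; lia.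
move: H1 H2; move: (S2 p d j.+1) (S1 p d j.+1) => x y; lia.
Qed.

Lemma Lsum_le_mid p d h : prime p -> p = h.*2.+1 ->
  forall j, 0 < j -> j <= h -> (Lsum p d j <= Lsum p d h)%R.
Proof.
move=> pr ph j j0 jh.
have [n en] : exists n, h = j + n by exists (h - j); lia.
elim: n j j0 jh en => [|n IH] j j0 jh en; first by rewrite en addn0.
apply: le_trans (Lsum_up d pr _) (IH j.+1 _ _ _); lia.
Qed.

Lemma Lsum_le_mid2 p d h : prime p -> p = h.*2.+1 ->
  forall j, h.+1 <= j -> j < p -> (Lsum p d j <= Lsum p d h.+1)%R.
Proof.
move=> pr ph j hj jp; have p0 := prime_gt0 pr.
have [n en] : exists n, j = h.+1 + n by exists (j - h.+1); lia.
elim: n j hj jp en => [|n IH] j hj jp en; first by rewrite en addn0.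
rewrite en addnS.
apply: le_trans (Lsum_down d p0 _ _) (IH (h.+1 + n) _ _ _); lia.
Qed.

Lemma bigmax_eq (p : nat) (G : nat -> int) j0 : 1 <= j0 < p ->
  (forall j, 1 <= j < p -> (G j <= G j0)%R) ->
  \big[Num.max/G 1%N]_(1 <= j < p) G j = G j0.
Proof.
move=> hj0 H; apply/le_anti/andP; split.
  rewrite big_seq; apply: bigmax_le => [|j]; first by apply: H; case/andP: hj0 => a b; rewrite (leq_ltn_trans a b).
  by rewrite mem_index_iota; apply: H.
by apply: le_bigmax_seq; rewrite // mem_index_iota.
Qed.

Lemma quad p h j : p = h.*2.+1 -> j < p -> j * (p - j) <= h * (p - h).
Proof.
move=> ph jp; have [jh|hj] := leqP j h.
  nia.
nia.
Qed.

Theorem mainTheorem3 (p d : nat) :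
  prime p -> odd p -> (0 < d)%N ->
  L p (d + p ^ 2) = (L p d + L p (p ^ 2 + 1))%R.
Proof.
move=> pr op d0; have p0 := prime_gt0 pr; have p1 := prime_gt1 pr.
set h := p./2.
have ph : p = h.*2.+1 by rewrite -{1}(odd_double_half p) op add1n.
have h1 : 1 <= h by lia.
set j0 := if (Lsum p d h <= Lsum p d h.+1)%R then h.+1 else h.
have j0r : 1 <= j0 < p by rewrite /j0; case: ifP => _; lia.
have Hd : forall j, 1 <= j < p -> (Lsum p d j <= Lsum p d j0)%R.
  move=> j /andP[j1 jp]; rewrite /j0; case: ifP => hh.
    have [jh|hj] := leqP j h.
      exact: le_trans (Lsum_le_mid d pr ph j1 jh) hh.
    by have := Lsum_le_mid2 d pr ph hj jp.
  have [jh|hj] := leqP j h; first by have := Lsum_le_mid d pr ph j1 jh.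
  apply: le_trans (Lsum_le_mid2 d pr ph hj jp) _.
  by apply/ltW; rewrite ltNge hh.
have cmax : forall j, j < p -> (j * (p - 1)) * (p - j) <= (j0 * (p - 1)) * (p - j0).
  move=> j jp.
  have e : (j0 * (p - 1)) * (p - j0) = (h * (p - 1)) * (p - h).
    rewrite /j0; case: ifP => _ //; rewrite ph; nia.
  rewrite e mulnAC [X in _ <= X]mulnAC leq_mul2r; apply/orP; right.
  exact: quad ph jp.
have j0p : j0 < p by case/andP: j0r.
rewrite /L (bigmax_eq (G := Lsum p d) j0r Hd).
rewrite (bigmax_eq (G := Lsum p (d + p ^ 2)) (j0 := j0)) //; last first.
  move=> j /andP[j1 jp]; rewrite !Lsum_shift //; apply: lerD; first by apply: Hd; rewrite j1.
  by rewrite lez_nat; apply: cmax.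
rewrite [p ^ 2 + 1]addnC (bigmax_eq (G := Lsum p (1 + p ^ 2)) (j0 := j0)) //; last first.
  move=> j /andP[j1 jp]; rewrite !Lsum_shift // !Lsum_one // !add0r.
  by rewrite lez_nat; apply: cmax.
by rewrite !Lsum_shift // Lsum_one // add0r.
Qed.
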